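(* Let $\mathbb{K}\in\{\mathbb{R},\mathbb{C}\}$, $F$ a locally convex topological $\mathbb{K}$-vector space, $E$ a topological $\mathbb{K}$-vector space, $U\subseteq E$ open and $\sigma\in\,]0,1]$. Let $W\subseteq\mathbb{K}$ be an open neighbourhood of $[0,1]$ and $h\colon U\times W\to F$ a $C^{1,\sigma}_{MB}$-map. Suppose that the weak integral $g(x):=\int_0^1h(x,t)\,dt$ exists in $F$ for each $x\in U$ and defines a map $g\colon U\to F$ which is $C^{1,\sigma}_{MB}$. Then the weak integral $\int_0^1 d_1h(x,y,t)\,dt$ exists in $F$ for all $x\in U$ and $y\in E$, and $\int_0^1 d_1h(x,y,t)\,dt=dg(x,y)$, where $d_1h(x,y,t):=d(h(\cdot,t))(x,y)$.
   Context: Vector spaces Hausdorff; usual absolute value on $\mathbb{K}$. Gauge on a topological $\mathbb{K}$-vector space $X$: $q\colon X\to[0,\infty[$ with $q(tx)=|t|q(x)$ and each $\{q<r\}$ a $0$-neighbourhood. A map $\phi$ on a subset $V\subseteq X$ is $C^{0,\sigma}$ if for every $x_0\in V$ and gauge $q$ on the target there exist a gauge $p$ on $X$ and a neighbourhood $V_0$ of $x_0$ in $V$ with $q(\phi(y)-\phi(x))\le p(y-x)^\sigma$ for $x,y\in V_0$. For $\phi$ on an open subset $V$ of $X$: $\phi$ is $C^{1,\sigma}_{MB}$ if $\phi$ is $C^{0,\sigma}$, the directional derivative $d\phi(x,y):=\frac{d}{dt}\big|_{t=0}\phi(x+ty)$ ($t\in\mathbb{K}$) exists for all $x\in V$, $y\in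 X$, and $d\phi\colon V\times X\to F$ is $C^{0,\sigma}$. Here $U\times W$ is open in $E\times\mathbb{K}$. Weak integral: for continuous $\gamma\colon[0,1]\to F$, $z\in F$ is the weak integral $\int_0^1\gamma(t)\,dt$ if $\lambda(z)=\int_0^1\lambda(\gamma(t))\,dt$ for every continuous linear $\lambda\colon F\to\mathbb{K}$. *)

(* Defs.v *)
From HB Require Import structures.
From mathcomp Require Import all_boot all_order all_algebra.
From mathcomp Require Import all_classical all_reals all_analysis.
From mathcomp Require Export complex.
Import Order.TTheory GRing.Theory Num.Theory.
Import numFieldNormedType.Exports.
Set Implicit Arguments. Unset Strict Implicit. Unset Printing Implicit Defensive.
Local Open Scope classical_set_scope.
Local Open Scope ring_scope.

HB.instance Definition _ (K : numFieldType) (X Y : preTopologicalLmodType K) :=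
  GRing.Lmodule.on (X * Y)%type.

(* The complex numbers C = R[i] over a real field R, as a numFieldType
   (so that it gets its standard norm topology). *)
Definition Cplx (R : realType) : numFieldType := R[i].

(* Throughout: R is the real field, K the scalar field (R or C),
   absK : K -> R the absolute value of K, emb : R -> K the inclusion R ⊆ K,
   kint f = \int_0^1 f(t) dt for a K-valued function f on [0,1]. *)

Definition gauge (R : realType) (K : numFieldType) (absK : K -> R)
    (X : preTopologicalLmodType K) (q : X -> R) : Prop :=
  (forall x, 0 <= q x) /\
  (forall (t : K) (x : X), q (t *: x) = absK t * q x) /\
  (forall r : R, 0 < r -> nbhs (0 : X) [set x | q x < r]).

Definition C0sigma (R : realType) (K : numFieldType) (absK : K -> R)
    (X Y : preTopologicalLmodType K) (V : set X) (phi : X -> Y) (sigma : R) : Prop :=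
  forall x0, V x0 -> forall q : Y -> R, gauge absK q ->
    exists p : X -> R, gauge absK p /\
      exists N : set X, nbhs x0 N /\
        forall x y, V x -> N x -> V y -> N y ->
          q (phi y - phi x) <= powR (p (y - x)) sigma.

Definition dirder (K : numFieldType) (X Y : preTopologicalLmodType K)
    (phi : X -> Y) (x y : X) (l : Y) : Prop :=
  (fun t : K => t^-1 *: (phi (x + t *: y) - phi x)) @ (0 : K)^' --> l.

Definition C1sigmaMB (R : realType) (K : numFieldType) (absK : K -> R)
    (X Y : preTopologicalLmodType K) (V : set X) (phi : X -> Y) (sigma : R) : Prop :=
  C0sigma absK V phi sigma /\
  exists dphi : X * X -> Y,
    (forall x y, V x -> dirder phi x y (dphi (x, y))) /\
    C0sigma absK (V `*` setT) dphi sigma.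

Definition weak_integral (R : realType) (K : numFieldType)
    (kint : (R -> K) -> K) (Y : preTopologicalLmodType K)
    (gam : R -> Y) (z : Y) : Prop :=
  {within `[0%R, 1%R], continuous gam} /\
  forall lam : Y -> K,
    (forall (a : K) (u v : Y), lam (a *: u + v) = a * lam u + lam v) ->
    continuous lam ->
    lam z = kint (lam \o gam).

Definition Rint01 (R : realType) (f : R -> R) : R :=
  Rintegral lebesgue_measure `[0%R, 1%R] f.

Definition Cint01 (R : realType) (f : R -> Cplx R) : Cplx R :=
  ((Rint01 (fun t => @complex.Re R (f t)))%:C + 'i * (Rint01 (fun t => @complex.Im R (f t)))%:C)%C.

(* Main.v *)
Require Import Defs.
From HB Require Import structures.
From mathcomp Require Import all_boot all_order all_algebra.
From mathcomp Require Import all_classical all_reals all_analysis.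
From mathcomp Require Import complex.
Import Order.TTheory GRing.Theory Num.Theory.
Import numFieldNormedType.Exports.
Local Open Scope classical_set_scope.
Local Open Scope ring_scope.
Set Implicit Arguments. Unset Strict Implicit.
Section Gen.
Variables (R : realType) (K : numFieldType) (absK : K -> R) (emb : R -> K).
Hypothesis normE : forall z, `|z| = emb (absK z).
Hypothesis embD : forall a b, emb (a + b) = emb a + emb b.
Hypothesis embM : forall a b, emb (a * b) = emb a * emb b.
Hypothesis emb1 : emb 1 = 1.
Hypothesis emb_le : forall a b, (emb a <= emb b) = (a <= b).
Hypothesis absK_emb : forall a, absK (emb a) = `|a|.

Lemma emb0 : emb 0 = 0.
Proof. by apply: (@addrI _ (emb 0)); rewrite -embD !addr0. Qed.
Lemma embN a : emb (- a) = - emb a.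
Proof. by apply: (@addrI _ (emb a)); rewrite -embD !subrr emb0. Qed.
Lemma embB a b : emb (a - b) = emb a - emb b.
Proof. by rewrite embD embN. Qed.
Lemma emb_inj : injective emb.
Proof. by move=> a b H; apply/le_anti; rewrite -!emb_le H lexx. Qed.
Lemma emb_lt a b : (emb a < emb b) = (a < b).
Proof. by rewrite !lt_def emb_le (inj_eq emb_inj). Qed.
Lemma absK_ge0 z : 0 <= absK z.
Proof. by rewrite -emb_le emb0 -normE. Qed.
Lemma absK0 : absK 0 = 0.
Proof. by apply: emb_inj; rewrite -normE normr0 emb0. Qed.
Lemma absK_eq0 z : absK z = 0 -> z = 0.
Proof. by move=> H; apply/normr0_eq0; rewrite normE H emb0. Qed.
Lemma absKM a b : absK (a * b) = absK a * absK b.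
Proof. by apply: emb_inj; rewrite embM -!normE normrM. Qed.
Lemma emb_neq0 a : a != 0 -> emb a != 0.
Proof. by apply: contra => /eqP H; apply/eqP; apply: emb_inj; rewrite H emb0. Qed.
Lemma embV a : emb a^-1 = (emb a)^-1.
Proof.
have [->|a0] := eqVneq a 0; first by rewrite invr0 emb0 invr0.
have ea0 := emb_neq0 a0.
by apply: (mulfI ea0); rewrite -embM !mulfV // emb1.
Qed.
Lemma absKV z : absK z^-1 = (absK z)^-1.
Proof. by apply: emb_inj; rewrite embV -!normE normfV. Qed.
Lemma absKN z : absK (- z) = absK z.
Proof. by apply: emb_inj; rewrite -!normE normrN. Qed.
Lemma absKD z w : absK (z + w) <= absK z + absK w.
Proof. by rewrite -emb_le embD -!normE ler_normD. Qed.
Lemma absK_lt z r : (absK z < r) = (`|z| < emb r).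
Proof. by rewrite normE emb_lt. Qed.
Lemma absK_gt0 z : z != 0 -> 0 < absK z.
Proof.
move=> z0; rewrite lt_def absK_ge0 andbT; apply/eqP => /absK_eq0 H.
by rewrite H eqxx in z0.
Qed.
Lemma absK_emb_pos a : 0 <= a -> absK (emb a) = a.
Proof. by move=> a0; rewrite absK_emb ger0_norm. Qed.

Lemma nbhsK0P (P : K -> Prop) : nbhs (0:K) P ->
  exists2 d : R, 0 < d & forall s, absK s < d -> P s.
Proof.
move=> /nbhs_ballP [e /= e0 H]; exists (absK e); first by rewrite absK_gt0 // gt_eqF.
move=> s hs; apply: H; rewrite /ball /= sub0r normrN.
by rewrite -(gtr0_norm e0) !normE emb_lt. Qed.
Lemma nbhsK0 (P : K -> Prop) (d : R) : 0 < d -> (forall s, absK s < d -> P s) ->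
  nbhs (0:K) P.
Proof.
move=> d0 H; apply/nbhs_ballP; exists (emb d) => /=.
  by rewrite -emb0 emb_lt.
by move=> s; rewrite /ball /= sub0r normrN -absK_lt; apply: H.
Qed.

Definition klin (Y : lmodType K) (lam : Y -> K) :=
  forall (a : K) (u v : Y), lam (a *: u + v) = a * lam u + lam v.

Section klin.
Variables (Y : lmodType K) (lam : Y -> K) (Hl : klin lam).
Lemma klin0 : lam 0 = 0.
Proof.
have := Hl 1 0 0; rewrite scaler0 addr0 mul1r.
by move/(congr1 (fun x => x - lam 0)); rewrite subrr addrK.
Qed.
Lemma klinZ a u : lam (a *: u) = a * lam u.
Proof. by have := Hl a u 0; rewrite !addr0 klin0 addr0. Qed.
Lemma klinD u v : lam (u + v) = lam u + lam v.
Proof. by have := Hl 1 u v; rewrite scale1r mul1r. Qed.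
Lemma klinB u v : lam (u - v) = lam u - lam v.
Proof. by have := Hl (-1) v u; rewrite scaleN1r mulN1r addrC => ->; rewrite addrC. Qed.
End klin.

Lemma gauge_lam (Y : preTopologicalLmodType K) (lam : Y -> K) :
  klin lam -> continuous lam -> gauge absK (fun v => absK (lam v)).
Proof.
move=> Hl Hc; split; first by move=> x; exact: absK_ge0.
split; first by move=> t x; rewrite (klinZ Hl) absKM.
move=> r r0.
have H0 : nbhs (lam 0) [set z | absK z < r].
  by rewrite (klin0 Hl); apply: (nbhsK0 r0).
exact: (Hc 0 _ H0).
Qed.

Lemma scaleC_cont (Y : topologicalLmodType K) (k : K) : continuous (fun w : Y => k *: w).
Proof.
move=> w.
apply: (@continuous_comp _ _ _ (fun w : Y => ((k : K^o), w)) (fun z : K^o * Y => z.1 *: z.2)).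
  by apply: (@cvg_pair _ _ _ (nbhs w) (nbhs (k:K^o)) (nbhs w)); [exact: cvg_cst | exact: cvg_id].
exact: scale_continuous.
Qed.

Lemma scaleV_cont (Y : topologicalLmodType K) (v : Y) : continuous (fun s : K => s *: v).
Proof.
move=> s.
apply: (@continuous_comp _ _ _ (fun s : K => ((s : K^o), v)) (fun z : K^o * Y => z.1 *: z.2)).
  by apply: (@cvg_pair _ _ _ (nbhs s) (nbhs (s:K^o)) (nbhs v)); [exact: cvg_id | exact: cvg_cst].
exact: scale_continuous.
Qed.

Lemma addC_cont (Y : topologicalLmodType K) (m : Y) : continuous (fun w : Y => m + w).
Proof.
move=> w.
apply: (@continuous_comp _ _ _ (fun w : Y => (m, w)) (fun z : Y * Y => z.1 + z.2)).
  by apply: (@cvg_pair _ _ _ (nbhs w) (nbhs m) (nbhs w)); [exact: cvg_cst | exact: cvg_id].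
exact: add_continuous.
Qed.

Lemma gauge_exists (Y : topologicalLmodType K) (N : set Y) : nbhs 0 N ->
  exists q : Y -> R, gauge absK q /\ (forall v, q v < 1 -> N v).
Proof.
move=> nN.
have : nbhs ((0 : K^o) *: (0 : Y)) N by rewrite scaler0.
move=> /(@scale_continuous K Y (0, 0)) [[A B] /= [nA nB] AB].
have [d d0 Ad] := nbhsK0P nA.
pose c := d / 2.
have c0 : 0 < c by rewrite divr_gt0.
have cd : c < d by rewrite /c ltr_pdivrMr // ltr_pMr // ltr1n.
have ec0 : emb c != 0 by apply: emb_neq0; rewrite gt_eqF.
pose V := [set w : Y | forall s, absK s <= 1 -> N (s *: w)].
have nV : nbhs 0 V.
  have nB' : nbhs (0 : Y) [set w | B ((emb c)^-1 *: w)].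
    have hB : nbhs ((emb c)^-1 *: (0:Y)) B by rewrite scaler0.
    have := @scaleC_cont Y (emb c)^-1 0 B hB. by [].
  apply: filterS nB' => w Bw s s1.
  have -> : s *: w = (s * emb c) *: ((emb c)^-1 *: w).
    by rewrite scalerA -mulrA mulfV // mulr1.
  apply: (AB (s * emb c : K^o, (emb c)^-1 *: w)); split => //=.
  apply: Ad; rewrite absKM absK_emb_pos ?ltW //.
  by apply: (le_lt_trans _ cd); rewrite ler_piMl // ltW.
have V0 : V 0 by apply: nbhs_singleton.
pose S v := [set absK t | t in [set t : K | t != 0 /\ V (t^-1 *: v)]].
have Slb v : has_lbound (S v) by exists 0 => _ [t _ <-]; exact: absK_ge0.
have Sne v : S v !=set0.
  have hv : nbhs ((0:K) *: v) V by rewrite scale0r.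
  have [d' d'0 Hd'] := nbhsK0P (@scaleV_cont Y v 0 V hv).
  have e0 : d' / 2 != 0 by rewrite gt_eqF // divr_gt0.
  exists (absK (emb (d' / 2))^-1), (emb (d' / 2))^-1 => //; split.
    by rewrite invr_eq0 emb_neq0.
  rewrite invrK; apply: Hd'; rewrite absK_emb_pos ?ltW ?divr_gt0 //.
  by rewrite ltr_pdivrMr // ltr_pMr // ltr1n.
pose q v := inf (S v).
have q_ge0 v : 0 <= q v by apply: lb_le_inf => // _ [t _ <-]; exact: absK_ge0.
have q_le v t : t != 0 -> V (t^-1 *: v) -> q v <= absK t.
  by move=> t0 Vt; apply: ge_inf => //; exists t.
have q_lt v r : q v < r -> exists t, [/\ t != 0, V (t^-1 *: v) & absK t < r].
  by move=> /(inf_lt (Sne v)) [_ [t [t0 Vt] <-] tr]; exists t.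
have q0 : q 0 = 0.
  apply/le_anti; rewrite q_ge0 andbT leNgt; apply/negP => qp.
  have h2 : 0 < q 0 / 2 by rewrite divr_gt0.
  have := q_le 0 (emb (q 0 / 2)) (emb_neq0 (lt0r_neq0 h2)); rewrite scaler0 => /(_ V0).
  rewrite absK_emb_pos; last exact: ltW h2.
  move=> H; have : q 0 / 2 < q 0 by rewrite ltr_pdivrMr // ltr_pMr // ltr1n.
  by rewrite ltNge H.
have qZle a v : a != 0 -> q (a *: v) <= absK a * q v.
  move=> a0; have aa0 := absK_gt0 a0.
  rewrite -ler_pdivrMl //; apply: lb_le_inf => // _ [t [t0 Vt] <-].
  rewrite ler_pdivrMl // -absKM; apply: q_le; first by rewrite mulf_neq0.
  by rewrite scalerA invfM mulrAC mulVf // mul1r.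
have qZ a v : q (a *: v) = absK a * q v.
  have [->|a0] := eqVneq a 0; first by rewrite scale0r q0 absK0 mul0r.
  apply/le_anti; rewrite qZle //=.
  have := qZle a^-1 (a *: v); rewrite scalerA mulVf // scale1r absKV => /(_ (invr_neq0 a0)) H.
  have := ler_wpM2l (absK_ge0 a) H; rewrite mulrA mulfV ?mul1r //.
  by rewrite gt_eqF // absK_gt0.
exists q; split; last first.
  move=> v /q_lt [t [t0 Vt t1]].
  have := Vt t (ltW t1); by rewrite scalerA mulfV // scale1r.
split => //; split => // r r0.
have r20 : 0 < r / 2 by rewrite divr_gt0.
have k0 : emb (r / 2) != 0 by rewrite emb_neq0 // gt_eqF.
have hV : nbhs ((emb (r / 2))^-1 *: (0:Y)) V by rewrite scaler0.
have nV2 := @scaleC_cont Y (emb (r / 2))^-1 0 V hV. apply: (@filterS _ _ _ [set v | V ((emb (r/2))^-1 *: v)]); last exact: nV2. move=> v Vv /=.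
apply: (le_lt_trans (q_le v _ k0 Vv)).
by rewrite absK_emb_pos ?ltW // ltr_pdivrMr // ltr_pMr // ltr1n.
Qed.

Lemma nbhsRP (a : R) (P : R -> Prop) : nbhs a P -> exists2 d, 0 < d & forall b, `|a - b| < d -> P b.
Proof. by move=> /nbhs_ballP [d /= d0 H]; exists d => // b hb; apply: H. Qed.
Lemma nbhsR (a : R) (P : R -> Prop) d : 0 < d -> (forall b, `|a - b| < d -> P b) -> nbhs a P.
Proof. by move=> d0 H; apply/nbhs_ballP; exists d. Qed.

Lemma nbhsKP (z : K) (P : K -> Prop) : nbhs z P ->
  exists2 d : R, 0 < d & forall s, absK (z - s) < d -> P s.
Proof.
move=> /nbhs_ballP [e /= e0 H]; exists (absK e); first by rewrite absK_gt0 // gt_eqF.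
move=> s hs; apply: H; rewrite /ball /=.
by rewrite -(gtr0_norm e0) !normE emb_lt.
Qed.
Lemma nbhsK (z : K) (P : K -> Prop) (d : R) : 0 < d ->
  (forall s, absK (z - s) < d -> P s) -> nbhs z P.
Proof.
move=> d0 H; apply/nbhs_ballP; exists (emb d) => /=; first by rewrite -emb0 emb_lt.
by move=> s; rewrite /ball /= -absK_lt; apply: H.
Qed.

Lemma emb_cont : continuous emb.
Proof.
move=> a A /nbhsKP [d d0 H]; apply: (@nbhsR a (emb @^-1` A) d d0) => b hb.
by apply: H; rewrite -embB absK_emb.
Qed.

Lemma emb_nbhs' : (emb @ (0:R)^') `=>` (0:K)^'.
Proof.
move=> A /nbhsK0P [d d0 H]; apply: (@nbhsR 0 _ d d0) => r hr r0.
by apply: H; [rewrite absK_emb -normrN -sub0r | exact: emb_neq0].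
Qed.

Lemma pair_eq (A B : Type) (p q : A * B) : p.1 = q.1 -> p.2 = q.2 -> p = q.
Proof. by case: p; case: q => ? ? ? ? /= -> ->. Qed.

Lemma powR_lt1 (s z : R) : 0 < s -> 0 <= z -> z < 1 -> powR z s < 1.
Proof.
move=> s0 z0 z1.
have -> : (1:R) = powR 1 s by rewrite powR1.
by apply: (gt0_ltr_powR s0) => //; rewrite nnegrE.
Qed.

Lemma powR_small (s e : R) : 0 < s -> 0 < e ->
  exists2 d, 0 < d & forall z, 0 <= z -> z < d -> powR z s < e.
Proof.
move=> s0 e0; exists (powR e s^-1); first exact: powR_gt0.
move=> z z0 zd.
have -> : e = powR (powR e s^-1) s by rewrite -powRrM mulVf ?gt_eqF // powRr1 // ltW.
by apply: (gt0_ltr_powR s0) => //; rewrite nnegrE // powR_ge0.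
Qed.

Lemma eq_eps (a b : R) : (forall e, 0 < e -> `|a - b| < e) -> a = b.
Proof.
move=> H; apply/eqP; rewrite -subr_eq0; apply: contraT => ne.
by have := H `|a - b|; rewrite normr_gt0 => /(_ ne); rewrite ltxx.
Qed.

Lemma within_contP (Y : topologicalType) (f : R -> Y) (A : set R) :
  (forall x, A x -> f @ within A (nbhs x) --> f x) -> {within A, continuous f}.
Proof. by move=> H; apply/subspace_continuousP.
Qed.

Lemma wcontB (A : set R) (f g : R -> R) : {within A, continuous f} ->
  {within A, continuous g} -> {within A, continuous (fun t => f t - g t)}.
Proof. by move=> cf cg z; apply: cvgB; [exact: cf | exact: cg]. Qed.
Lemma wcontM (A : set R) (a : R) (f : R -> R) : {within A, continuous f} ->
  {within A, continuous (fun t => a * f t)}.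
Proof. by move=> cf z; apply: cvgMl_tmp; exact: cf. Qed.

Lemma I01_int (f : R -> R) : {within `[0%R, 1%R], continuous f} ->
  (@lebesgue_measure R).-integrable `[0%R, 1%R] (EFin \o f).
Proof. by move=> cf; apply: continuous_compact_integrable => //; exact: segment_compact. Qed.

Lemma itv01P (t : R) : (`[0%R, 1%R]%classic : set R) t -> 0 <= t <= 1.
Proof. by rewrite /= in_itv. Qed.
Lemma itv01P' (t : R) : 0 <= t <= 1 -> (`[0%R, 1%R]%classic : set R) t.
Proof. by rewrite /= in_itv. Qed.

Lemma Rint01_bound (f : R -> R) (e : R) : {within `[0%R, 1%R], continuous f} ->
  (forall t, 0 <= t <= 1 -> `|f t| <= e) -> `|Rint01 f| <= e.
Proof.
move=> cf fe; rewrite /Rint01.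
have m01 : measurable (`[0%R, 1%R]%classic : set (measurableTypeR R)) by exact: measurable_itv.
apply: le_trans (le_normr_Rintegral m01 (I01_int cf)) _.
have cfa : {within `[0%R, 1%R], continuous (fun t => `|f t|)}.
  by move=> z; apply: cvg_norm; exact: cf.
have cfe : {within `[0%R, 1%R], continuous (fun t : R => e)}.
  by move=> z; exact: cvg_cst.
apply: le_trans (le_Rintegral m01 (I01_int cfa) (I01_int cfe) _) _.
  by move=> t /itv01P; exact: fe.
rewrite Rintegral_cst //.
have L := @lebesgue_measure_itv R `[0%R,1%R]; rewrite /= lte_fin ltr01 /= in L.
rewrite [X in fine X](_ : _ = 1%E) ?mulr1 //. by apply: (etrans L); rewrite sube0.
Qed.

Lemma Rint01_comb (a : R) (f1 f0 f2 : R -> R) :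
  {within `[0%R, 1%R], continuous f1} -> {within `[0%R, 1%R], continuous f0} ->
  {within `[0%R, 1%R], continuous f2} ->
  Rint01 (fun t => a * (f1 t - f0 t) - f2 t) = a * (Rint01 f1 - Rint01 f0) - Rint01 f2.
Proof.
move=> c1 c0 c2; rewrite /Rint01.
have m01 : measurable (`[0%R, 1%R]%classic : set (measurableTypeR R)) by exact: measurable_itv.
rewrite RintegralB //; last first.
  by apply: I01_int.
  by apply: I01_int; apply: wcontM; apply: wcontB.
rewrite RintegralZl //; last by apply: I01_int; apply: wcontB.
by rewrite RintegralB //; apply: I01_int.
Qed.

Lemma is_derive_of (f : R -> R) (u l : R) :
  (fun r : R => r^-1 * (f (r + u) - f u)) @ 0^' --> l -> is_derive u 1 f l.
Proof.
move=> H.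
have H' : (fun r : R => r^-1 *: ((f \o shift u) (r *: 1) - f u)) @ 0^' --> l.
  suff -> : (fun r : R => r^-1 *: ((f \o shift u) (r *: 1) - f u)) =
            (fun r : R => r^-1 * (f (r + u) - f u)) by [].
  by apply/funext => r /=; rewrite /shift /= [r *: 1]mulr1.
apply: DeriveDef; first exact: (cvgP _ H').
exact: (cvg_lim _ H').
Qed.


Variable c : bool -> K -> R.
Hypothesis cD : forall i z w, c i (z + w) = c i z + c i w.
Hypothesis cZ : forall i u z, c i (emb u * z) = u * c i z.
Hypothesis cle : forall i z, `|c i z| <= absK z.
Hypothesis cinj : forall z w, (forall i, c i z = c i w) -> z = w.
Variable kint : (R -> K) -> K.
Hypothesis ckint : forall i f, c i (kint f) = Rint01 (c i \o f).

Lemma c0 i : c i 0 = 0.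
Proof. by apply: (@addrI _ (c i 0)); rewrite -cD !addr0. Qed.
Lemma cN i z : c i (- z) = - c i z.
Proof. by apply: (@addrI _ (c i z)); rewrite -cD !subrr c0. Qed.
Lemma cB i z w : c i (z - w) = c i z - c i w.
Proof. by rewrite cD cN. Qed.
Lemma c_cont i : continuous (c i).
Proof.
move=> z A /nbhsRP [d d0 H]; apply: (@nbhsK z (c i @^-1` A) d d0) => s hs.
by apply: H; rewrite -cB; exact: le_lt_trans (cle _ _) hs.
Qed.

Theorem main_gen (E : topologicalLmodType K) (F : topologicalLmodType K) :
  hausdorff_space F ->
  forall (U : set E) (W : set K^o) (sigma : R) (h : (E * K^o)%type -> F) (g : E -> F),
  open U -> 0 < sigma ->
  (forall t : R, 0 <= t <= 1 -> W (emb t)) ->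
  C1sigmaMB absK (U `*` W) h sigma ->
  (forall x, U x -> weak_integral kint (fun t => h (x, emb t)) (g x)) ->
  forall x, U x -> forall (y : E) (l : F), dirder g x y l ->
  forall D : R -> F,
    (forall t : R, 0 <= t <= 1 -> dirder (fun z => h (z, emb t)) x y (D t)) ->
    weak_integral kint D l.
Proof.
move=> hF U W sigma h g oU s0 HW [_ [dh [Hdh Cdh]]] Hint x Ux y l Hg D HDd.
pose a (u t : R) : (E * K^o) * (E * K^o) := ((x + emb u *: y, emb t), (y, 0)).
have a0E t : a 0 t = ((x, emb t), (y, 0)) by rewrite /a emb0 scale0r addr0.
have Ux0 : U (x + emb 0 *: y) by rewrite emb0 scale0r addr0.
have curve_cont : continuous (fun u : R => x + emb u *: y).
  move=> u; apply: (@continuous_comp _ _ _ (fun u => emb u *: y) (fun v => x + v)).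
    apply: (@continuous_comp _ _ _ emb (fun s => s *: y)); first exact: emb_cont.
    exact: scaleV_cont.
  exact: addC_cont.
have a_cont (T : topologicalType) (f1 f2 : T -> R) (z : T) :
    {for z, continuous f1} -> {for z, continuous f2} ->
    {for z, continuous (fun w => a (f1 w) (f2 w))}.
  move=> c1 c2.
  apply: (@cvg_pair _ _ _ (nbhs z) (nbhs ((x + emb (f1 z) *: y, emb (f2 z)) : E * K^o))
     (nbhs ((y, 0) : E * K^o))); last exact: cvg_cst.
  apply: (@cvg_pair _ _ _ (nbhs z) (nbhs (x + emb (f1 z) *: y)) (nbhs (emb (f2 z) : K^o))).
    exact: (continuous_comp c1 (curve_cont _)).
  have ce : {for f2 z, continuous emb} := @emb_cont (f2 z).
  move=> A; rewrite !nbhs_filterE => hA; exact: (c2 _ (ce _ hA)).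
have dom u t : U (x + emb u *: y) -> 0 <= t <= 1 -> ((U `*` W) `*` setT) (a u t).
  by move=> Uu t01; split => //; split => //=; exact: HW.
have HD t : 0 <= t <= 1 -> D t = dh (a 0 t).
  move=> t01.
  have H2 := Hdh (x, emb t) (y, 0) (conj Ux (HW t t01)).
  rewrite a0E; apply: (cvg_unique hF (HDd t t01)).
  rewrite /dirder in H2 *.
  have eqf : (fun s : K => s^-1 *: (h ((x, emb t) + s *: (y, 0)) - h (x, emb t))) =
             (fun s : K => s^-1 *: (h (x + s *: y, emb t) - h (x, emb t))).
    apply/funext => s; congr (_ *: (h _ - _)); apply: pair_eq => /=; first by [].
    by rewrite scaler0 addr0.
  by rewrite -eqf.
have Dcont : {within `[0%R, 1%R], continuous D}.
  apply: within_contP => t0 /itv01P t01 M /= hM.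
  have nN0 : nbhs (0 : F) [set v | M (D t0 + v)].
    have hM' : nbhs (D t0 + 0) M by rewrite addr0.
    exact: (@addC_cont F (D t0) 0 M hM').
  have [q [gq qN]] := gauge_exists nN0.
  have [p [gp [N [nN Hb]]]] := Cdh (a 0 t0) (dom 0 t0 Ux0 t01) q gq.
  pose e1 : (E * K^o) * (E * K^o) := ((0, 1), (0, 0)).
  have adiff t : a 0 t - a 0 t0 = emb (t - t0) *: e1.
    apply: pair_eq; apply: pair_eq => /=.
    - by rewrite subrr scaler0.
    - by rewrite embB [_ *: _]mulr1.
    - by rewrite subrr scaler0.
    - by rewrite subrr scaler0.
  have pe0 : 0 <= p e1 := gp.1 e1.
  have n1 : nbhs t0 [set t | N (a 0 t)].
    exact: (@a_cont R (fun=> 0) id t0 (cvg_cst _) cvg_id N nN).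
  have pe1 : 0 < p e1 + 1 by rewrite (le_lt_trans pe0) // ltrDl ltr01.
  have n2 : nbhs t0 [set t | p (a 0 t - a 0 t0) < 1].
    apply: (@nbhsR t0 _ ((p e1 + 1)^-1)); first by rewrite invr_gt0.
    move=> t ht /=; rewrite adiff gp.2.1 absK_emb distrC.
    apply: (le_lt_trans (ler_wpM2l (normr_ge0 _) (_ : p e1 <= p e1 + 1))).
      by rewrite lerDl ler01.
    by rewrite -ltr_pdivlMr // div1r.
  apply: filterS (filterI n1 n2) => t [N1 P1] /itv01P t01t.
  rewrite /= (HD t t01t).
  have Hq := Hb (a 0 t0) (a 0 t) (dom 0 t0 Ux0 t01) (nbhs_singleton nN)
    (dom 0 t Ux0 t01t) N1.
  have := qN (dh (a 0 t) - D t0).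
  rewrite (HD t0 t01) /= [dh (a 0 t0) + _]addrC subrK; apply.
  apply: (le_lt_trans Hq); apply: powR_lt1 => //.
  exact: gp.1.
split; first exact: Dcont.
move=> lam Hl Hc.
apply: cinj => i; rewrite ckint.
pose mu := fun v => c i (lam v).
have mu_cont : continuous mu.
  by move=> v; apply: (@continuous_comp _ _ _ lam (c i)); [exact: Hc | exact: c_cont].
have muB v w : mu (v - w) = mu v - mu w by rewrite /mu (klinB Hl) cB.
have muZ r v : mu (emb r *: v) = r * mu v by rewrite /mu (klinZ Hl) cZ.
have mu_int x' : U x' -> mu (g x') = Rint01 (fun t => mu (h (x', emb t))).
  by move=> Ux'; have [_ Hw] := Hint x' Ux'; rewrite /mu (Hw lam Hl Hc) ckint.
have hcont x' : U x' -> {within `[0%R, 1%R], continuous (fun t => mu (h (x', emb t)))}.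
  move=> Ux'; have [Hw _] := Hint x' Ux'.
  by move=> z A hA; exact: (Hw z _ (mu_cont _ _ hA)).
have Dmcont : {within `[0%R, 1%R], continuous (fun t => mu (D t))}.
  by move=> z A hA; exact: (Dcont z _ (mu_cont _ _ hA)).
change (mu l = Rint01 (fun t => mu (D t))).
apply: eq_eps => e e0.
have e20 : 0 < e / 2 by rewrite divr_gt0.
have [d1 d10 Hd1] : exists2 d1, 0 < d1 & forall s : R, 0 < s -> s < d1 ->
    `|mu l - mu ((emb s)^-1 *: (g (x + emb s *: y) - g x))| < e / 2.
  have Hm := cvg_comp _ _ Hg (mu_cont l).
  move/cvgrPdist_lt : Hm => /(_ _ e20) /nbhsK0P [d d0 Hd].
  exists d => // s s0' sd; apply: Hd; first by rewrite absK_emb_pos // ltW.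
  by rewrite emb_neq0 // gt_eqF.
have [d0 d00 Hd0] : exists2 d0, 0 < d0 & forall u, `|u| < d0 -> U (x + emb u *: y).
  have hU : nbhs (x + emb 0 *: y) U by apply: open_nbhs_nbhs; split.
  have := curve_cont 0 _ hU => /nbhsRP [d dd Hd]; exists d => // u hu.
  by apply: Hd; rewrite sub0r normrN.
have [dz dz0 Hdz] := powR_small s0 e20.
pose e2 : (E * K^o) * (E * K^o) := ((y, 0), (0, 0)).
have adiff u t : a u t - a 0 t = emb u *: e2.
  apply: pair_eq; apply: pair_eq => /=.
  - by rewrite emb0 scale0r addr0 addrC addKr.
  - by rewrite subrr [_ *: _]mulr0.
  - by rewrite subrr scaler0.
  - by rewrite subrr scaler0.
have unif : \forall u \near (0:R), (`[0%R, 1%R]%classic : set R) `<=`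
    (fun t => absK (lam (dh (a u t)) - lam (dh (a 0 t))) < e / 2).
  have cov := (near_covering_withinP _).2 ((compact_near_coveringP _).1 (@segment_compact R 0 1)).
  pose P := fun u t => absK (lam (dh (a u t)) - lam (dh (a 0 t))) < e / 2.
  suff Hcov : forall t0, (`[0%R, 1%R]%classic : set R) t0 ->
      \forall t \near t0 & u \near (0:R), (`[0%R, 1%R]%classic : set R) t -> P u t.
    exact: (cov R (nbhs (0:R)) P _ Hcov).
  move=> t0 /itv01P t01.
  have [p [gp [N [nN Hb]]]] := Cdh (a 0 t0) (dom 0 t0 Ux0 t01) _ (gauge_lam Hl Hc).
  have pe0 : 0 <= p e2 := gp.1 e2.
  have pe1 : 0 < p e2 + 1 by rewrite (le_lt_trans pe0) // ltrDl ltr01.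
  have cf : {for ((t0, 0) : R * R), continuous (@fst R R)}.
    exact: cvg_fst.
  have cs : {for ((t0, 0) : R * R), continuous (@snd R R)}.
    exact: cvg_snd.
  have n1 : nbhs ((t0, 0) : R * R) [set pr | N (a pr.2 pr.1)].
    exact: (@a_cont _ snd fst (t0, 0) cs cf N nN).
  have n2 : nbhs ((t0, 0) : R * R) [set pr | N (a 0 pr.1)].
    exact: (@a_cont _ (fun=> 0) fst (t0, 0) (cvg_cst _) cf N nN).
  have n3 : nbhs ((t0, 0) : R * R) [set pr | `|pr.2| < d0].
    apply: (cs [set u | `|u| < d0]); apply: (@nbhsR 0 _ d0 d00) => u.
    by rewrite sub0r normrN.
  have n4 : nbhs ((t0, 0) : R * R) [set pr | `|pr.2| * p e2 < dz].
    apply: (cs [set u | `|u| * p e2 < dz]).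
    apply: (@nbhsR 0 _ (dz / (p e2 + 1))); first by rewrite divr_gt0.
    move=> u; rewrite sub0r normrN => hu /=.
    apply: (le_lt_trans (ler_wpM2l (normr_ge0 _) (_ : p e2 <= p e2 + 1))).
      by rewrite lerDl ler01.
    by rewrite -ltr_pdivlMr.
  apply: filterS (filterI (filterI n1 n2) (filterI n3 n4)).
  move=> [t u] /= [[N1 N2] [U3 Q4]] /itv01P t01t.
  rewrite /P -(klinB Hl).
  have Hq := Hb (a 0 t) (a u t) (dom 0 t Ux0 t01t) N2 (dom u t (Hd0 u U3) t01t) N1.
  apply: (le_lt_trans Hq); rewrite adiff gp.2.1 absK_emb.
  apply: Hdz => //; exact: mulr_ge0.
have [d2 d20 Hd2] := nbhsRP unif.
pose m := Num.min d0 (Num.min d1 d2).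
have m0 : 0 < m by rewrite !lt_min d00 d10 d20.
have md0 : m <= d0 by rewrite ge_min lexx.
have md1 : m <= d1 by rewrite !ge_min lexx orbT.
have md2 : m <= d2 by rewrite !ge_min lexx !orbT.
pose s := m / 2.
have sp : 0 < s by rewrite divr_gt0.
have sm : s < m by rewrite ltr_pdivrMr // ltr_pMr // ltr1n.
have sn0 : s != 0 by rewrite gt_eqF.
have Us : U (x + emb s *: y) by apply: Hd0; rewrite gtr0_norm //; exact: lt_le_trans sm md0.
have mvt t : 0 <= t <= 1 ->
    `|s^-1 * (mu (h (x + emb s *: y, emb t)) - mu (h (x, emb t))) - mu (D t)| < e / 2.
  move=> t01.
  pose phi u := mu (h (x + emb u *: y, emb t)).
  pose G u := mu (dh (a u t)).
  have der (u : R) : `|u| < d0 -> is_derive u (1:R) phi (G u).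
    move=> ud; apply: is_derive_of.
    have Hd := Hdh (x + emb u *: y, emb t) (y, 0) (conj (Hd0 u ud) (HW t t01)).
    have H1 := cvg_comp _ _ emb_nbhs' (cvg_comp _ _ Hd (mu_cont _)).
    suff eqf : (fun r : R => r^-1 * (phi (r + u) - phi u)) =
      (mu \o (fun s : K => s^-1 *: (h ((x + emb u *: y, emb t) + s *: (y, 0)) -
                                    h (x + emb u *: y, emb t)))) \o emb.
      by rewrite eqf.
    apply/funext => r /=; rewrite -embV muZ muB /phi.
    congr (_ * (mu (h _) - _)); apply: pair_eq => /=.
      by rewrite embD scalerDl addrA addrAC.
    by rewrite scaler0 addr0.
  have sd0 : s < d0 by exact: lt_le_trans sm md0.
  have inI u : u \in `]0, s[%R -> `|u| < d0.
    rewrite in_itv /= => /andP [u0 us]; rewrite gtr0_norm //; exact: lt_trans us sd0.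
  have phic : {within `[0, s], continuous phi}.
    apply: derivable_within_continuous => u; rewrite in_itv /= => /andP [u0 us].
    have us' : `|u| < d0 by rewrite ger0_norm //; exact: le_lt_trans us sd0.
    by case: (der u us').
  have [xi xi_in Hxi] := @MVT R phi G 0 s sp (fun u uin => der u (inI u uin)) phic.
  have phi0 : phi 0 = mu (h (x, emb t)) by rewrite /phi emb0 scale0r addr0.
  rewrite -phi0 Hxi subr0 mulrCA mulVf // mulr1 (HD t t01).
  rewrite /G /mu -cB; apply: le_lt_trans (cle _ _) _.
  apply: (Hd2 xi); last exact: itv01P'.
  move: xi_in; rewrite in_itv /= => /andP [x0 xs].
  rewrite sub0r normrN gtr0_norm //; apply: lt_trans xs _; exact: lt_le_trans sm md2.
have Hq : mu ((emb s)^-1 *: (g (x + emb s *: y) - g x)) =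
    s^-1 * (Rint01 (fun t => mu (h (x + emb s *: y, emb t))) -
            Rint01 (fun t => mu (h (x, emb t)))).
  by rewrite -embV muZ muB !mu_int.
have H1 := Hd1 s sp (lt_le_trans sm md1).
rewrite Hq in H1.
have H2 : `|s^-1 * (Rint01 (fun t => mu (h (x + emb s *: y, emb t))) -
            Rint01 (fun t => mu (h (x, emb t)))) - Rint01 (fun t => mu (D t))| <= e / 2.
  rewrite -Rint01_comb; [|exact: hcont|exact: hcont|exact: Dmcont].
  apply: Rint01_bound; last by move=> t t01; apply: ltW; exact: mvt.
  apply: wcontB; last exact: Dmcont.
  by apply: wcontM; apply: wcontB; apply: hcont.
set Q := s^-1 * (Rint01 (fun t => mu (h (x + emb s *: y, emb t))) -
            Rint01 (fun t => mu (h (x, emb t)))) in H1 H2 *.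
set RD := Rint01 (fun t => mu (D t)) in H2 *.
have tri : `|mu l - RD| <= `|mu l - Q| + `|Q - RD|.
  have -> : mu l - RD = (mu l - Q) + (Q - RD) by rewrite addrA subrK.
  exact: ler_normD.
apply: le_lt_trans tri _; rewrite [e]splitr; exact: ltr_leD H1 H2.
Qed.
End Gen.

Unset Implicit Arguments. Set Strict Implicit.

Theorem lemmaC6 (R : realType) :
  (* Case K = R *)
  (forall (E : topologicalLmodType R) (F : tvsType R),
     hausdorff_space E -> hausdorff_space F ->
     forall (U : set E) (W : set R^o) (sigma : R)
       (h : (E * R^o)%type -> F) (g : E -> F),
     open U -> 0 < sigma -> sigma <= 1 ->
     open W -> (forall t : R, 0 <= t <= 1 -> W t) ->
     C1sigmaMB (fun t : R => `|t|) (U `*` W) h sigma ->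
     (forall x, U x -> weak_integral (@Rint01 R) (fun t => h (x, t)) (g x)) ->
     C1sigmaMB (fun t : R => `|t|) U g sigma ->
     forall x, U x -> forall (y : E) (l : F), dirder g x y l ->
     forall D : R -> F,
       (forall t : R, 0 <= t <= 1 -> dirder (fun z => h (z, t)) x y (D t)) ->
       weak_integral (@Rint01 R) D l)
  /\
  (* Case K = C *)
  (forall (E : topologicalLmodType (Cplx R)) (F : tvsType (Cplx R)),
     hausdorff_space E -> hausdorff_space F ->
     forall (U : set E) (W : set (Cplx R)^o) (sigma : R)
       (h : (E * (Cplx R)^o)%type -> F) (g : E -> F),
     open U -> 0 < sigma -> sigma <= 1 ->
     open W -> (forall t : R, 0 <= t <= 1 -> W (t%:C)%C) ->
     C1sigmaMB (fun z : Cplx R => Normc.normc z) (U `*` W) h sigma ->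
     (forall x, U x ->
        weak_integral (@Cint01 R) (fun t => h (x, (t%:C)%C)) (g x)) ->
     C1sigmaMB (fun z : Cplx R => Normc.normc z) U g sigma ->
     forall x, U x -> forall (y : E) (l : F), dirder g x y l ->
     forall D : R -> F,
       (forall t : R, 0 <= t <= 1 ->
          dirder (fun z => h (z, (t%:C)%C)) x y (D t)) ->
       weak_integral (@Cint01 R) D l).
Proof.
split.
  move=> E F _ hF U W sigma h g oU s0 _ _ HW Hh Hint _ x Ux y l Hgl D HD.
  apply: (@main_gen R R (fun t => `|t|) (fun t => t) _ _ _ _ _ _
            (fun _ z => z) _ _ _ _ (@Rint01 R) _ E F hF U W sigma h g oU s0 HW Hh Hint x Ux y l Hgl D HD) => //.
  by move=> z w /(_ true).
move=> E F _ hF U W sigma h g oU s0 _ _ HW Hh Hint _ x Ux y l Hgl D HD.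
apply: (@main_gen R (Cplx R) (fun z => Normc.normc z) (fun t => (t%:C)%C) _ _ _ _ _ _
          (fun b z => if b then complex.Re z else complex.Im z) _ _ _ _ (@Cint01 R) _
          E F hF U W sigma h g oU s0 HW Hh Hint x Ux y l Hgl D HD).
- by move=> z; rewrite normc_def; case: z.
- by move=> a b; rewrite rmorphD.
- by move=> a b; rewrite rmorphM.
- by rewrite rmorph1.
- by move=> a b; rewrite lecR.
- by move=> a /=; rewrite expr0n /= addr0 sqrtr_sqr.
- by move=> [] [a1 b1] [a2 b2].
- by move=> [] u [a b] /=; rewrite mul0r ?subr0 ?addr0.
- move=> [] [a b] /=; rewrite -sqrtr_sqr ler_wsqrtr //; [by rewrite lerDl sqr_ge0 | by rewrite lerDr sqr_ge0].
- move=> [a1 b1] [a2 b2] H; have := H true; have := H false => /= -> ->. by [].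
- move=> [] f; rewrite /Cint01 /=.
    by rewrite mul0r mul1r subr0 addr0.
  by rewrite mul0r mul1r !add0r.
Qed.
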